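(* Consider the system $x[k+1]=Ax[k]+w[k]$, $y[k]=Cx[k]+v[k]$ with $A=\mathrm{diag}(\lambda_1,0,\dots,0)\in\mathbb{R}^{n\times n}$ where $0<|\lambda_1|<1$, a single-row measurement matrix $C=[1\ \gamma]$ with $\gamma\in\mathbb{R}^{1\times(n-1)}$, process noise covariance $W=I_{n\times n}$ and measurement noise covariance $V=\mathbf{0}$. Let $\Sigma$ be the steady-state a priori error covariance of the Kalman filter. Then, with $\alpha^2:=\lVert\gamma\rVert_2^2$, $$\Sigma_{11}=\frac{1+\alpha^2\lambda_1^2-\alpha^2+\sqrt{(\alpha^2-\alpha^2\lambda_1^2-1)^2+4\alpha^2}}{2}.$$ Moreover, viewing $\Sigma_{11}$ as a function $\Sigma_{11}(\alpha^2)$ of $\alpha^2\in\mathbb{R}_{\ge0}$, it is strictly increasing, with $\Sigma_{11}(0)=1$ and $\lim_{\alpha\to\infty}\Sigma_{11}(\alpha^2)=\frac{1}{1-\lambda_1^2}$.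
   Context: Here $w[k]$ and $v[k]$ are uncorrelated zero-mean white Gaussian noise processes with covariances $W$ and $V$. The steady-state a priori error covariance $\Sigma$ is the limit as $k\to\infty$ of the Kalman filter's a priori error covariance $\Sigma_{k|k-1}$; it satisfies $\Sigma=A\Sigma A^T+W-A\Sigma C^T(C\Sigma C^T+V)^{-1}C\Sigma A^T$, with the inverse interpreted as a pseudo-inverse when singular. *)

(* Defs.v *)
From HB Require Import structures.
From mathcomp Require Import all_boot all_order all_algebra.
From mathcomp Require Import all_classical all_reals all_analysis.
Set Implicit Arguments. Unset Strict Implicit. Unset Printing Implicit Defensive.
Import Order.TTheory GRing.Theory Num.Theory.
Import numFieldNormedType.Exports.
Local Open Scope classical_set_scope.
Local Open Scope ring_scope.

(* Moore-Penrose pseudo-inverse of a 1x1 matrix [s]: [1/s] if s <> 0, [0]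
   otherwise (in MathComp, 0^-1 = 0 in a field). *)
Definition pinv1 (R : realType) (M : 'M[R]_1) : 'M[R]_1 := ((M 0 0)^-1)%:M.

Definition riccati (R : realType) (m : nat) (A W : 'M[R]_m) (C : 'rV[R]_m)
  (V : 'M[R]_1) (S : 'M[R]_m) : 'M[R]_m :=
  A *m S *m A^T + W
  - A *m S *m C^T *m pinv1 (C *m S *m C^T + V) *m C *m S *m A^T.

Definition psd (R : realType) (m : nat) (S : 'M[R]_m) : Prop :=
  S^T = S /\ forall x : 'rV[R]_m, 0 <= (x *m S *m x^T) 0 0.

Definition steady_state (R : realType) (m : nat) (A W : 'M[R]_m)
  (C : 'rV[R]_m) (V : 'M[R]_1) (S0 Sig : 'M[R]_m) : Prop :=
  forall i j, (fun k : nat => (iter k (riccati A W C V) S0) i j) @ \oo --> Sig i j.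

(* The system matrices of the lemma, with state dimension 1 + n. *)
Definition Amat (R : realType) (n : nat) (l : R) : 'M[R]_(1 + n) :=
  block_mx (l%:M : 'M[R]_1) 0 0 0.
Definition Cmat (R : realType) (n : nat) (g : 'rV[R]_n) : 'rV[R]_(1 + n) :=
  row_mx (1 : 'M[R]_1) g.

(* Closed form of Sigma_11 as a function of a = alpha^2. *)
Definition sigma11 (R : realType) (l a : R) : R :=
  (1 + a * l ^+ 2 - a
   + Num.sqrt ((a - a * l ^+ 2 - 1) ^+ 2 + 4 * a)) / 2.

(* Main.v *)
Require Import Defs.
From HB Require Import structures.
From mathcomp Require Import all_boot all_order all_algebra.
From mathcomp Require Import all_classical all_reals all_analysis.
From mathcomp Require Import ring lra.
Import Order.TTheory GRing.Theory Num.Theory.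
Import numFieldNormedType.Exports.
Local Open Scope classical_set_scope.
Local Open Scope ring_scope.

Set Implicit Arguments. Unset Strict Implicit.
Section M.
Variable R : realType.

Lemma mul_deltaX m n p (i0 : 'I_m) (j0 : 'I_n) (X : 'M[R]_(n, p)) i j :
  (delta_mx i0 j0 *m X) i j = (i == i0)%:R * X j0 j.
Proof.
rewrite mxE (bigD1 j0) //= big1 ?addr0 => [|k nk]; rewrite mxE ?eqxx ?andbT //.
by rewrite (negbTE nk) andbF mul0r.
Qed.

Lemma mul_Xdelta m n p (i0 : 'I_n) (j0 : 'I_p) (X : 'M[R]_(m, n)) i j :
  (X *m delta_mx i0 j0) i j = X i i0 * (j == j0)%:R.
Proof.
rewrite mxE (bigD1 i0) //= big1 ?addr0 => [|k nk]; rewrite mxE ?eqxx //.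
by rewrite (negbTE nk) mulr0.
Qed.

Lemma dXd N (X : 'M[R]_N.+1) :
  (delta_mx 0 0 : 'M[R]_N.+1) *m X *m delta_mx 0 0 = X 0 0 *: (delta_mx 0 0 : 'M[R]_N.+1).
Proof.
apply/matrixP=> i j; rewrite mul_Xdelta mul_deltaX !mxE.
by case: (i == 0); case: (j == 0); rewrite /= ?mul1r ?mulr1 ?mul0r ?mulr0.
Qed.

Lemma rshift_neq0 n (j : 'I_n) : (rshift 1 j == 0 :> 'I_(1+n)) = false.
Proof. by []. Qed.

Lemma AmatE n (l : R) : Amat n l = l *: (delta_mx 0 0 : 'M[R]_(1+n)).
Proof.
apply/matrixP=> i j; rewrite /Amat.
case: (split_ordP i) => i' ->; case: (split_ordP j) => j' ->;
  rewrite ?block_mxEul ?block_mxEur ?block_mxEdl ?block_mxEdr !mxE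
   ?rshift_neq0 ?andbF /= ?mulr0 //.
by rewrite !ord1 mulr1.
Qed.
Lemma mx1_00 (P : 'M[R]_1) m k :
  forall (X : 'M[R]_(m,1)) (Y : 'M[R]_(1,k)) i j, (X *m P *m Y) i j = X i 0 * P 0 0 * Y 0 j.
Proof.
move=> X Y i j; rewrite mxE big_ord1 mxE big_ord1 //.
Qed.

Lemma ricE n l (C : 'rV[R]_(1+n)) (S : 'M[R]_(1+n)) :
  riccati (Amat n l) 1%:M C 0 S = 1%:M +
   (l ^+ 2 * (S 0 0 - (S *m C^T) 0 0 * ((C *m S *m C^T) 0 0)^-1 * (C *m S) 0 0))
     *: (delta_mx 0 0 : 'M[R]_(1+n)).
Proof.
rewrite /riccati /pinv1 AmatE addr0 linearZ /= trmx_delta.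
rewrite -!scalemxAl -!scalemxAr dXd.
set E := (delta_mx 0 0 : 'M[R]_(1+n)).
set P := ((C *m S *m C^T) 0 0)^-1%:M.
have -> : E *m S *m C^T *m P *m C *m S *m E = E *m ((S *m C^T) *m P *m (C *m S)) *m E
  by rewrite !mulmxA.
rewrite dXd mx1_00 [P 0 0]mxE mulr1n.
rewrite !scalerA mulrBr scalerBl addrA [1%:M + _]addrC.
congr (_ *: _ + _ - _ *: _); ring.
Qed.
Lemma mul_XdY m n p q (i0 : 'I_n) (j0 : 'I_p) (X : 'M[R]_(m, n)) (Y : 'M[R]_(p, q)) i j :
  (X *m delta_mx i0 j0 *m Y) i j = X i i0 * Y j0 j.
Proof.
rewrite -mulmxA mxE (bigD1 i0) //= big1 ?addr0 => [|k nk]; rewrite mul_deltaX ?eqxx ?mul1r //.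
by rewrite (negbTE nk) mul0r mulr0.
Qed.

Lemma C00 n (g : 'rV[R]_n) : Cmat g 0 0 = 1.
Proof.
have -> : (0 : 'I_(1+n)) = lshift n 0 by apply/val_inj.
by rewrite /Cmat row_mxEl mxE.
Qed.

Lemma CCt n (g : 'rV[R]_n) : (Cmat g *m (Cmat g)^T) 0 0 = 1 + \sum_(j < n) g 0 j ^+ 2.
Proof.
rewrite /Cmat tr_row_mx mul_row_col mxE mul1mx trmx1 mxE /=; congr (_ + _).
by rewrite mxE; apply: eq_bigr => j _; rewrite mxE expr2.
Qed.

Lemma addE m n (A B : 'M[R]_(m,n)) i j : (A + B) i j = A i j + B i j.
Proof. by rewrite mxE. Qed.
Lemma sclE m n a (A : 'M[R]_(m,n)) i j : (a *: A) i j = a * A i j.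
Proof. by rewrite mxE. Qed.
Lemma trE m n (A : 'M[R]_(m,n)) i j : (A^T) i j = A j i.
Proof. by rewrite mxE. Qed.

Lemma ric_form n l (g : 'rV[R]_n) t :
  riccati (Amat n l) 1%:M (Cmat g) 0 (1%:M + t *: (delta_mx 0 0 : 'M[R]_(1+n))) =
  1%:M + (l ^+ 2 * ((1 + t) - (1 + t) * (1 + \sum_(j < n) g 0 j ^+ 2 + t)^-1 * (1 + t)))
     *: (delta_mx 0 0 : 'M[R]_(1+n)).
Proof.
rewrite ricE; congr (_ + (_ * _) *: _).
rewrite mulmxDl mulmxDr !mul1mx mulmx1 -scalemxAl -scalemxAr mulmxDl -scalemxAl.
rewrite !addE !sclE mul_XdY mul_Xdelta mul_deltaX CCt !trE C00 !mxE /=.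
by rewrite !mulr1.
Qed.
Lemma oppE m n (A : 'M[R]_(m,n)) i j : (- A) i j = - A i j.
Proof. by rewrite mxE. Qed.

Lemma psd_q n (S : 'M[R]_(1+n)) (C : 'rV[R]_(1+n)) : psd S ->
  0 <= S 0 0 - (S *m C^T) 0 0 * ((C *m S *m C^T) 0 0)^-1 * (C *m S) 0 0.
Proof.
move=> [St Hq].
set e := (delta_mx 0 0 : 'rV[R]_(1+n)).
have bb : (C *m S) 0 0 = (S *m C^T) 0 0.
  by rewrite -trE trmx_mul St.
rewrite bb.
set b : R := (S *m C^T) 0 0.
set c : R := (C *m S *m C^T) 0 0.
have quad : forall u v, ((u *: e - v *: C) *m S *m (u *: e - v *: C)^T) 0 0
   = u ^+ 2 * S 0 0 - 2 * (u * (v * b)) + v ^+ 2 * c.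
  move=> u v; rewrite linearB /= !linearZ /= !scalerN mulmxDl !mulmxDr !mulNmx !mulmxN.
  do 3 rewrite ?(mulmxBl, mulmxBr, mulmxDl, mulmxDr, mulNmx, mulmxN, scalerN) -?scalemxAl -?scalemxAr ?addE ?oppE ?sclE.
  rewrite /e trmx_delta !mul_Xdelta !mul_deltaX bb -!mulmxA mul_deltaX -/b !eqxx /=.
  rewrite [C *m (S *m C^T)]mulmxA -/c.
  rewrite /GRing.scale /=; ring.
have c0 : 0 <= c.
  by have := Hq C; rewrite /c.
have S0 : 0 <= S 0 0.
  have := Hq e; rewrite /e trmx_delta mul_Xdelta mul_deltaX eqxx /=. by rewrite mulr1 mul1r.
have [c00|cn0] := eqVneq c 0.
  by rewrite c00 invr0 mulr0 mul0r subr0.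
have cp : 0 < c by rewrite lt0r cn0.
have := Hq (c *: e - b *: C); rewrite quad => H.
have H' : 0 <= c * (c * S 0 0 - b ^+ 2) by move: H; rewrite !expr2; nra.
have H2 : 0 <= c * S 0 0 - b ^+ 2.
  by move: H'; rewrite pmulr_rge0.
have -> : S 0 0 - b * c^-1 * b = (c * S 0 0 - b ^+ 2) / c by field.
by apply: divr_ge0 => //; exact: ltW.
Qed.


Lemma sig_facts (l a : R) : 0 < l ^+ 2 -> l ^+ 2 < 1 -> 0 <= a ->
  [/\ 1 <= sigma11 l a,
      sigma11 l a ^+ 2 - sigma11 l a = a * (1 - (1 - l ^+ 2) * sigma11 l a) &
      0 < 1 - (1 - l ^+ 2) * sigma11 l a].
Proof.
move=> L0 L1 a0; rewrite /sigma11.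
set L := l ^+ 2 in L0 L1 *.
set D := (a - a * L - 1) ^+ 2 + 4 * a.
have D0 : 0 <= D by rewrite /D addr_ge0 ?sqr_ge0 ?mulr_ge0.
set r := Num.sqrt D.
have r0 : 0 <= r := sqrtr_ge0 D.
have r2 : r ^+ 2 = D := sqr_sqrtr D0.
rewrite /D in r2.
split.
- have : 1 + a - a * L <= r.
    rewrite leNgt; apply/negP => H.
    have : r ^+ 2 < (1 + a - a * L) ^+ 2.
      rewrite !expr2; nra.
    rewrite r2; nra.
  lra.
- have Hs : forall s : R, s = (1 + a * L - a + r) / 2 ->
     s ^+ 2 - s - a * (1 - (1 - L) * s) = (r ^+ 2 - ((a - a * L - 1) ^+ 2 + 4 * a)) / 4.
    by move=> s ->; field.
  apply/eqP; rewrite -subr_eq0; apply/eqP; rewrite Hs // r2 subrr mul0r //.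
- set m := 1 - L.
  have m0 : 0 < m by rewrite /m; lra.
  have m1 : m < 1 by rewrite /m; lra.
  have K0 : 0 < 2 - m + m ^+ 2 * a by nra.
  have : m * r < 2 - m + m ^+ 2 * a.
    rewrite ltNge; apply/negP => H.
    have : (2 - m + m ^+ 2 * a) ^+ 2 <= (m * r) ^+ 2.
      rewrite !expr2; nra.
    rewrite exprMn r2 /m; nra.
  rewrite /m; nra.
Qed.
Lemma sig_mono (l a b : R) : 0 < l ^+ 2 -> l ^+ 2 < 1 -> 0 <= a -> a < b ->
  sigma11 l a < sigma11 l b.
Proof.
move=> L0 L1 a0 ab.
have b0 : 0 <= b by lra.
have [A1 A2 A3] := @sig_facts l a L0 L1 a0.
have [B1 B2 B3] := @sig_facts l b L0 L1 b0.
move: A1 A2 A3 B1 B2 B3; set sa := sigma11 l a; set sb := sigma11 l b; set m := 1 - l ^+ 2.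
move=> A1 A2 A3 B1 B2 B3.
rewrite ltNge; apply/negP => H.
have H1 : sb ^+ 2 - sb <= sa ^+ 2 - sa.
  have : 0 <= (sa - sb) * (sa + sb - 1) by apply: mulr_ge0; lra.
  rewrite !expr2; lra.
have H2 : a * (1 - m * sa) <= a * (1 - m * sb).
  apply: ler_wpM2l => //; have : 0 <= m by rewrite /m; lra.
  move=> m0; have : m * sb <= m * sa by apply: ler_wpM2l.
  lra.
have H3 : a * (1 - m * sb) < b * (1 - m * sb) by rewrite ltr_pM2r.
lra.
Qed.

Lemma sig_contr (l a s : R) : 0 < l ^+ 2 -> l ^+ 2 < 1 -> 0 <= a -> 0 <= s ->
  let s' := 1 + l ^+ 2 * (s - s * (1 * (s + a))^-1 * s) in
  1 <= s' /\ `|s' - sigma11 l a| <= l ^+ 2 * `|s - sigma11 l a|.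
Proof.
move=> L0 L1 a0 s0 s'.
have [A1 A2 _] := @sig_facts l a L0 L1 a0.
move: A1 A2 @s'; set t := sigma11 l a; set L := l ^+ 2 in L0 L1 *.
rewrite mul1r => A1 A2 s'; rewrite /s'; clear s'.
have [sa0|sa0] := eqVneq (s + a) 0.
  have s00 : s = 0 by lra.
  have a00 : a = 0 by lra.
  have t1 : t = 1.
    move: A2; rewrite a00 mul0r => A2.
    have : t * (t - 1) = 0 by rewrite -A2; ring.
    move/eqP; rewrite mulf_eq0 => /orP[/eqP|/eqP]; lra.
  rewrite s00 t1 /= !mul0r !subrr mulr0 addr0 subrr normr0; split => //.
  by apply: mulr_ge0; [lra|exact: normr_ge0].
have sap : 0 < s + a by lra.
have tap : 0 < t + a by lra.
have E1 : s - s * (s + a)^-1 * s = s * a / (s + a) by field; rewrite ?lt0r_neq0.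
have E2 : 1 + L * (s * a / (s + a)) - t
   = L * a ^+ 2 * (s - t) / ((s + a) * (t + a)).
  have Ht : t = 1 + L * t * a / (t + a).
    have Hq : t * (t + a) = (t + a) + L * t * a.
      apply/eqP; rewrite -subr_eq0.
      have -> : t * (t + a) - (t + a + L * t * a) = (t ^+ 2 - t) - a * (1 - (1 - L) * t) by ring.
      by rewrite A2 subrr.
    rewrite -[t in LHS](mulfK (lt0r_neq0 tap)) Hq; field; exact: lt0r_neq0.
  rewrite {1}Ht; field; apply/andP; split; exact: lt0r_neq0.
rewrite E1; split.
  have : 0 <= L * (s * a / (s + a)) by apply: mulr_ge0; [lra|apply: divr_ge0; [apply: mulr_ge0|lra]].
  lra.
rewrite E2 normrM normrV ?unitfE ?lt0r_neq0 ?mulr_gt0 // normrM.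
rewrite (ger0_norm (ltW (mulr_gt0 sap tap))) (ger0_norm (mulr_ge0 (ltW L0) (sqr_ge0 a))).
set d := `|s - t|.
have d0 : 0 <= d := normr_ge0 _.
rewrite ler_pdivrMr ?mulr_gt0 //.
have : a ^+ 2 <= (s + a) * (t + a) by rewrite expr2; nra.
move=> Ha.
have : 0 <= L * d * ((s + a) * (t + a) - a ^+ 2).
  by apply: mulr_ge0; [apply: mulr_ge0; lra | lra].
move=> H; have -> : L * d * ((s + a) * (t + a)) = L * d * ((s + a) * (t + a) - a ^+ 2) + L * a ^+ 2 * d by ring.
lra.
Qed.
Lemma sig_lim (l : R) : 0 < l ^+ 2 -> l ^+ 2 < 1 ->
  sigma11 l x @[x --> +oo] --> (1 - l ^+ 2)^-1.
Proof.
move=> L0 L1.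
set m := 1 - l ^+ 2.
have m0 : 0 < m by rewrite /m; lra.
apply/cvgrPdist_le => e e0.
exists (m ^+ 3 * e)^-1; split; first by rewrite num_real.
move=> x Hx.
have x0 : 0 < x.
  by apply: lt_trans Hx; rewrite invr_gt0 mulr_gt0 // exprn_gt0.
have [A1 A2 A3] := @sig_facts l x L0 L1 (ltW x0).
move: A1 A2 A3; set s := sigma11 l x => A1 A2 A3.
rewrite -/m in A2 A3.
have me0 : 0 < m ^+ 3 * e by rewrite mulr_gt0 // exprn_gt0.
have H1 : 1 < x * (m ^+ 3 * e).
  by rewrite -(mulVf (lt0r_neq0 me0)) ltr_pM2r.
set q := 1 - m * s in A2 A3.
have ms : m * s < 1 by rewrite /q in A3; lra.
have ms2 : (m * s) ^+ 2 < 1.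
  rewrite expr2; have : 0 <= m * s by apply: mulr_ge0; lra.
  nra.
have H2 : x * q * m ^+ 2 <= (m * s) ^+ 2.
  rewrite -A2.
  have -> : (m * s) ^+ 2 = (s ^+ 2 - s) * m ^+ 2 + s * m ^+ 2 by ring.
  rewrite lerDl; apply: mulr_ge0; [lra | exact: sqr_ge0].
have H3 : x * m ^+ 2 * (q - m * e) < 0.
  have -> : x * m ^+ 2 * (q - m * e) = x * q * m ^+ 2 - x * (m ^+ 3 * e).
    rewrite /q; ring.
  lra.
have H4 : q < m * e.
  have xm : 0 < x * m ^+ 2 by rewrite mulr_gt0 // exprn_gt0.
  rewrite -subr_lt0; move: H3; rewrite pmulr_rlt0 //.
have -> : m^-1 - s = q / m by rewrite /q; field; exact: lt0r_neq0.
rewrite ger0_norm; last by apply: divr_ge0; lra.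
rewrite ler_pdivrMr // mulrC; lra.
Qed.
End M.
Unset Implicit Arguments. Set Strict Implicit.

Theorem lemma3 (R : realType) (n : nat) (l : R) (g : 'rV[R]_n) :
  0 < `|l| < 1 ->
  (forall S0 Sig : 'M[R]_(1 + n), psd S0 ->
     steady_state (Amat n l) 1%:M (Cmat g) 0 S0 Sig ->
     Sig ord0 ord0 = sigma11 l (\sum_(j < n) g 0 j ^+ 2))
  /\ (forall a b : R, 0 <= a -> a < b -> sigma11 l a < sigma11 l b)
  /\ sigma11 l 0 = 1
  /\ (sigma11 l x @[x --> +oo] --> (1 - l ^+ 2)^-1).
Proof.
move=> /andP[l0 l1].
have Ll : l ^+ 2 = `|l| ^+ 2 by rewrite real_normK // num_real.
have L0 : 0 < l ^+ 2 by rewrite Ll exprn_gt0.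
have L1 : l ^+ 2 < 1 by rewrite Ll; nra.
split; last split; last split.
- move=> S0 Sig HS Hss.
  set a := \sum_(j < n) g 0 j ^+ 2.
  have a0 : 0 <= a by apply: sumr_ge0 => j _; exact: sqr_ge0.
  set t := sigma11 l a.
  set f := fun s : R => 1 + l ^+ 2 * (s - s * (1 * (s + a))^-1 * s).
  set E := (delta_mx 0 0 : 'M[R]_(1+n)).
  set ric := riccati (Amat n l) 1%:M (Cmat g) 0.
  have step : forall s, ric (1%:M + (s - 1) *: E) = 1%:M + (f s - 1) *: E.
    move=> s; rewrite /ric ric_form -/a.
    have -> : 1 + (s - 1) = s by ring.
    have -> : 1 + a + (s - 1) = 1 * (s + a) by ring.
    by rewrite /f addrAC subrr add0r.
  set s1 := 1 + l ^+ 2 * (S0 0 0 - (S0 *m (Cmat g)^T) 0 0 *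
              ((Cmat g *m S0 *m (Cmat g)^T) 0 0)^-1 * (Cmat g *m S0) 0 0).
  have Hs1 : ric S0 = 1%:M + (s1 - 1) *: E by rewrite /ric ricE /s1 addrAC subrr add0r.
  have s10 : 0 <= s1.
    have := psd_q (Cmat g) HS => q0.
    rewrite /s1; have : 0 <= l ^+ 2 * (S0 0 0 - (S0 *m (Cmat g)^T) 0 0 *
              ((Cmat g *m S0 *m (Cmat g)^T) 0 0)^-1 * (Cmat g *m S0) 0 0).
      by apply: mulr_ge0 => //; exact: ltW.
    lra.
  set K := `|s1 - t|.
  have inv : forall k, exists s, iter k.+1 ric S0 = 1%:M + (s - 1) *: E /\ 0 <= s
                          /\ `|s - t| <= (l ^+ 2) ^+ k * K.
    elim=> [|k [s [Hk [s0 Hb]]]].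
      by exists s1; split => //; split => //; rewrite expr0 mul1r.
    have [C1 C2] := sig_contr L0 L1 a0 s0.
    exists (f s); split; first by rewrite iterS Hk step.
    split; first by rewrite /f; lra.
    apply: (le_trans C2); rewrite [(l ^+ 2) ^+ k.+1]exprS -mulrA ler_wpM2l //; exact: ltW.
  have ent : forall s, (1%:M + (s - 1) *: E) 0 0 = s.
    by move=> s; rewrite addE sclE !mxE /= mulr1; ring.
  have Hu : (fun k => iter k ric S0 0 0) @ \oo --> t.
    rewrite -cvg_shiftS.
    have Hg : (fun k => (l ^+ 2) ^+ k * K) @ \oo --> 0.
      have q1 : `|l ^+ 2| < 1 by rewrite ger0_norm // ltW.
      have := @cvgMl R nat \oo _ (fun k => (l ^+ 2) ^+ k) 0 K (cvg_expr q1).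
      by rewrite mul0r => H; apply: H; exact: _.
    apply: (@squeeze_cvgr _ _ _ _ (fun k => t - (l ^+ 2) ^+ k * K) (fun k => t + (l ^+ 2) ^+ k * K)).
    - near=> k; have [s [Hk [_ Hb]]] := inv k.
      rewrite /mk_sequence /= -iterS Hk ent; move: Hb; rewrite ler_norml; move=> /andP[h1 h2].
      apply/andP; split; lra.
    - have := cvgB (cvg_cst t) Hg; rewrite subr0; exact.
    - have := cvgD (cvg_cst t) Hg; rewrite addr0; exact.
  rewrite -(cvg_lim (@Rhausdorff R) (Hss ord0 ord0)).
  exact: (cvg_lim (@Rhausdorff R) Hu).
- move=> a b a0 ab; exact: sig_mono.
- rewrite /sigma11 !(mul0r, mulr0, subr0, addr0, sub0r) sqrrN expr1n sqrtr1.
  by field.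
- exact: sig_lim.
Unshelve. all: end_near.
Qed.
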